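(* Let $\sigma\in\mathcal S_d$. Then $\sigma\in\mathcal B$ if and only if there exists a probability vector $\mathbf p$ on $\mathcal I$ (entries $\ge0$ summing to $1$) such that $\chi_{\sigma_1}(\mathbf p)<\chi_{\sigma_2}(\mathbf p)<\dots<\chi_{\sigma_d}(\mathbf p)$.
   Context: Setting: $\mathcal I=\{1,\dots,N\}$, $f_i(x)=A_ix+t_i$ on $\mathbb R^d$ with $A_i=\mathrm{diag}(\lambda_i^{(1)},\dots,\lambda_i^{(d)})$, all $\lambda_i^{(n)}\in(0,1)$, $f_i([0,1]^d)\subset[0,1]^d$, no two maps agree on $[0,1]^d$, and for all $m\ne n$ there is $i$ with $\lambda_i^{(n)}\ne\lambda_i^{(m)}$. $\Sigma=\mathcal I^{\mathbb N}$. For $\mathbf i\in\Sigma$, $r>0$, $1\le n\le d$, $L_{\mathbf i}(r,n)$ is the unique integer with $\prod_{\ell=1}^{L_{\mathbf i}(r,n)}\lambda_{i_\ell}^{(n)}\le r<\prod_{\ell=1}^{L_{\mathbf i}(r,n)-1}\lambda_{i_\ell}^{(n)}$. For a permutation $\sigma=(\sigma_1,\dots,\sigma_d)$ of $\{1,\dots,d\}$, $\mathbf i$ determines a strictly $\sigma$-ordered cylinder at scale $r$ if, with $L=L_{\mathbf i}(r,\sigma_d)$, $\prod_{\ell=1}^L\lambda_{i_\ell}^{(\sigma_d)}<\prod_{\ell=1}^L\lambda_{i_\ell}^{(\sigma_{d-1})}<\dots<\prod_{\ell=1}^L\lambda_{i_\ell}^{(\sigma_1)}$. $\mathcal B$ is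 the set of $\sigma$ for which some $\mathbf i\in\Sigma$ and $r>0$ determine a strictly $\sigma$-ordered cylinder at scale $r$. Lyapunov exponent: $\chi_x(\mathbf p)=-\sum_{i\in\mathcal I}p(i)\log\lambda_i^{(x)}$ for a coordinate $x$. *)

(* Defs.v *)
From mathcomp Require Import all_boot all_order all_algebra all_fingroup.
From mathcomp Require Import all_classical all_reals exp.
Set Implicit Arguments. Unset Strict Implicit. Unset Printing Implicit Defensive.
Import Order.TTheory GRing.Theory Num.Theory.
Local Open Scope ring_scope.

Section Defs.
Variables (R : realType) (N d : nat).
(* lam i n = lambda_i^(n+1); translations t i n; coordinates 'I_d,
   maps 'I_N (0-indexed). *)
Variables (lam t : 'I_N -> 'I_d -> R).

Definition fmap (i : 'I_N) (x : 'I_d -> R) : 'I_d -> R :=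
  fun n => lam i n * x n + t i n.

Definition in_cube (x : 'I_d -> R) : Prop := forall n, 0 <= x n <= 1.

Definition diag_IFS_assumptions : Prop :=
  [/\ (forall i n, 0 < lam i n < 1),
      (forall i x, in_cube x -> in_cube (fmap i x)),
      (forall i j, i != j -> exists x, in_cube x /\ fmap i x <> fmap j x)
    & (forall m n : 'I_d, m != n -> exists i, lam i n != lam i m)].

(* Sigma = I^N : w l is the (l+1)-th letter i_{l+1} *)
Definition cylprod (w : nat -> 'I_N) (L : nat) (n : 'I_d) : R :=
  \prod_(l < L) lam (w l) n.

(* L = L_w(r,n): prod_{l<=L} <= r < prod_{l<=L-1}
   (L = 0 never qualifies since it would need 1 <= r < 1) *)
Definition is_Lscale (w : nat -> 'I_N) (r : R) (n : 'I_d) (L : nat) : Prop :=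
  cylprod w L n <= r /\ r < cylprod w L.-1 n.

(* w determines a strictly sigma-ordered cylinder at scale r;
   sigma_k (1-indexed) is s (k-1); sigma_d is s at index d-1 *)
Definition strictly_ordered (w : nat -> 'I_N) (r : R) (s : {perm 'I_d}) : Prop :=
  exists L : nat,
    (forall k : 'I_d, val k = d.-1 -> is_Lscale w r (s k) L) /\
    (forall j k : 'I_d, (j < k)%N -> cylprod w L (s k) < cylprod w L (s j)).

Definition in_B (s : {perm 'I_d}) : Prop :=
  exists (w : nat -> 'I_N) (r : R), 0 < r /\ strictly_ordered w r s.

Definition prob_vector (p : 'I_N -> R) : Prop :=
  (forall i, 0 <= p i) /\ \sum_i p i = 1.

Definition lyap (p : 'I_N -> R) (x : 'I_d) : R :=
  - \sum_i p i * ln (lam i x).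

End Defs.

(* Main.v *)
Require Import Defs.
From mathcomp Require Import all_boot all_order all_algebra all_fingroup.
From mathcomp Require Import all_classical all_reals exp.
From mathcomp Require Import lra.
Import Order.TTheory GRing.Theory Num.Theory.
Local Open Scope ring_scope.
Set Implicit Arguments. Unset Strict Implicit. Unset Printing Implicit Defensive.

Section Helpers.
Variables (R : realType) (N d : nat) (lam : 'I_N -> 'I_d -> R).
Hypothesis hl : forall i n, 0 < lam i n.

Definition cnt (w : nat -> 'I_N) (L : nat) (i : 'I_N) : R :=
  \sum_(l < L) ((w l == i)%:R : R).

Lemma sum_ind (j : 'I_N) (f : 'I_N -> R) : \sum_i (j == i)%:R * f i = f j.
Proof.
rewrite (bigD1 j) //= eqxx mul1r big1 ?addr0 // => i /negbTE.
by rewrite eq_sym => ->; rewrite mul0r.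
Qed.

Lemma cylprod_gt0 w L n : 0 < cylprod lam w L n.
Proof. by apply: prodr_gt0 => l _. Qed.

Lemma ln_cylprod w L n :
  ln (cylprod lam w L n) = \sum_i cnt w L i * ln (lam i n).
Proof.
elim: L => [|L IH].
  rewrite /cylprod big_ord0 ln1 big1 // => i _.
  by rewrite /cnt big_ord0 mul0r.
rewrite /cylprod big_ord_recr /= lnM ?posrE ?cylprod_gt0 //.
rewrite /cylprod in IH; rewrite IH.
rewrite /cnt.
under [RHS]eq_bigr => i _ do rewrite big_ord_recr /= mulrDl.
by rewrite big_split /= sum_ind.
Qed.

Lemma cylprod_lt w L n : (0 < L)%N -> (forall i n, lam i n < 1) ->
  cylprod lam w L n < cylprod lam w L.-1 n.
Proof.
case: L => // L _ hl1.
by rewrite /cylprod big_ord_recr /= gtr_pMr ?hl1 // cylprod_gt0.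
Qed.

Lemma word_exists (i0 : 'I_N) S (c : 'I_N -> nat) : (\sum_i c i)%N = S ->
  exists w : nat -> 'I_N, forall i, cnt w S i = (c i)%:R.
Proof.
elim: S c => [|S IH] c hc.
  exists (fun _ => i0) => i; rewrite /cnt big_ord0.
  move/eqP: hc; rewrite sum_nat_eq0 => /forallP /(_ i) /eqP ->.
  by [].
have [j hj] : exists j, (0 < c j)%N.
  apply/existsP; apply: contraT; rewrite negb_exists => /forallP h.
  move: hc; rewrite big1 // => i _; have := h i; by case: (c i).
pose c' i := if i == j then (c j).-1 else c i.
have hc' : (\sum_i c' i)%N = S.
  move: hc; rewrite (bigD1 j) //= => hc.
  rewrite (bigD1 j) //= /c' eqxx.
  rewrite (eq_bigr c) => [|i /negbTE -> //].
  by move: hc; rewrite -(prednK hj) addSn => -[].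
have [w' hw'] := IH c' hc'.
exists (fun l => if (l < S)%N then w' l else j) => i.
rewrite /cnt big_ord_recr /= ltnn.
rewrite (eq_bigr (fun l : 'I_S => ((w' l == i)%:R : R))); last first.
  by move=> l _; rewrite ltn_ord.
rewrite [X in X + _]hw' /c'.
case: (eqVneq i j) => [->|hij].
  by rewrite /= natr1 prednK.
by rewrite addr0.
Qed.

End Helpers.

Theorem lemma3p1 (R : realType) (N d : nat) (lam t : 'I_N -> 'I_d -> R)
    (hd : (0 < d)%N) (hIFS : diag_IFS_assumptions lam t) (s : {perm 'I_d}) :
  in_B lam s <->
  exists p : 'I_N -> R, prob_vector p /\
    (forall j k : 'I_d, (j < k)%N -> lyap lam p (s j) < lyap lam p (s k)).
Proof.
case: hIFS => hlam _ _ _.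
have hl i n : 0 < lam i n by case/andP: (hlam i n).
have hl1 i n : lam i n < 1 by case/andP: (hlam i n).
have hk0 : (d.-1 < d)%N by rewrite ltn_predL.
pose k0 : 'I_d := Ordinal hk0.
split.
  move=> [w [r [hr [L [hsc hord]]]]].
  have hL : (0 < L)%N.
    case: L hsc hord => // hsc _.
    have [h1 h2] := hsc k0 erefl.
    move: h1 h2; rewrite /cylprod big_ord0 => h1 h2.
    by have := le_lt_trans h1 h2; rewrite ltxx.
  exists (fun i => cnt R w L i / L%:R); split.
    split=> [i|].
      by apply: divr_ge0; [apply: sumr_ge0 => l _ | ].
    have h1 l : \sum_i ((w l == i)%:R : R) = 1.
      rewrite -[RHS](sum_ind (w l) (fun _ => (1:R))).
      by apply: eq_bigr => i _; rewrite mulr1.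
    rewrite -mulr_suml /cnt exchange_big /=.
    under eq_bigr do rewrite h1.
    rewrite sumr_const card_ord divff //.
    by rewrite pnatr_eq0 -lt0n.
  have hly n : lyap lam (fun i => cnt R w L i / L%:R) n
             = - (ln (cylprod lam w L n) / L%:R).
    rewrite /lyap ln_cylprod // mulr_suml; congr (- _).
    by apply: eq_bigr => i _; rewrite mulrAC.
  move=> j k hjk; rewrite !hly ltrN2 ltr_pM2r ?invr_gt0 ?ltr0n //.
  by rewrite ltr_ln ?posrE ?cylprod_gt0 //; exact: hord.
move=> [p [[hp0 hp1] hlt]].
have [i0 _] : exists i : 'I_N, true.
  case: (pickP (@predT 'I_N)) => [i _|h0]; first by exists i.
  move: hp1; rewrite big1 => [/eqP|i _]; first by rewrite eq_sym oner_eq0.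
  by have := h0 i.
pose a j k i := ln (lam i (s j)) - ln (lam i (s k)).
pose g j k := lyap lam p (s k) - lyap lam p (s j).
have hg j k : \sum_i p i * a j k i = g j k.
  rewrite /g /lyap opprK addrC -sumrB; apply: eq_bigr => i _.
  by rewrite mulrBr.
pose A j k := \sum_i `|a j k i|.
pose K := \sum_j \sum_k `|A j k / g j k|.
pose M := ((Num.truncn K).+1 + N)%N.
have hMK : K < M%:R.
  rewrite /M natrD; have := truncnS_gt K; have := ler0n R N; lra.
pose c i := Num.truncn (M%:R * p i).
have hc1 i : (c i)%:R <= M%:R * p i by rewrite truncn_le mulr_ge0.
have hc2 i : M%:R * p i < (c i)%:R + 1 by rewrite natr1 truncnS_gt.
pose L := (\sum_i c i)%N.
have [w hw] := word_exists R i0 (erefl L).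
have hlnw n : ln (cylprod lam w L n) = \sum_i (c i)%:R * ln (lam i n).
  by rewrite ln_cylprod //; apply: eq_bigr => i _; rewrite hw.
have hLpos : (0 < L)%N.
  have h : (M%:R : R) - N%:R <= L%:R.
    rewrite /L natr_sum.
    have : \sum_i (M%:R * p i - 1) <= \sum_i ((c i)%:R : R).
      by apply: ler_sum => i _; have := hc2 i; lra.
    by rewrite sumrB -mulr_sumr hp1 mulr1 sumr_const card_ord.
  move: h; rewrite /M natrD -natr1 => h.
  rewrite -(ltr0n R); have := ler0n R (Num.truncn K); lra.
exists w, (cylprod lam w L (s k0)); split; first exact: cylprod_gt0.
exists L; split.
  move=> k hk; have -> : k = k0 by apply: val_inj.
  by split; [exact: lexx | exact: cylprod_lt].
move=> j k hjk.
rewrite -ltr_ln ?posrE ?cylprod_gt0 // !hlnw.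
have hgpos : 0 < g j k by rewrite subr_gt0; exact: hlt.
have hAg : A j k < M%:R * g j k.
  have hK : `|A j k / g j k| <= K.
    rewrite /K (bigD1 j) //= (bigD1 k) //= -addrA lerDl.
    apply: addr_ge0; apply: sumr_ge0 => *; [exact: normr_ge0|].
    by apply: sumr_ge0 => *; exact: normr_ge0.
  rewrite -ltr_pdivrMr //.
  exact: le_lt_trans (ler_norm _) (le_lt_trans hK hMK).
have hlow : M%:R * g j k - A j k <= \sum_i (c i)%:R * a j k i.
  rewrite -hg mulr_sumr /A -sumrB; apply: ler_sum => i _.
  have h1 := hc1 i; have h2 := hc2 i; have h3 := hp0 i.
  case: (leP 0 (a j k i)) => ha; [rewrite ger0_norm // | rewrite ltr0_norm //]; nra.
rewrite -subr_gt0 -sumrB.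
under eq_bigr do rewrite -mulrBr.
lra.
Qed.
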